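(* Let $n\ge 2$ and $k\neq 0$ be integers, $\zeta=2\pi/n$, $s_1>0$, $\nu>0$. Let $u_n:\mathbb{R}\to\mathbb{C}$ be $2\pi$-periodic, define $u_j(t)=e^{ij\zeta}u_n(t+jk\zeta)$ and $q_j(t)=e^{it\sqrt{s_1}/\nu}u_j(t)$ for all integers $j$, and let $\Omega=\frac{1}{n}\left(k\frac{\sqrt{s_1}}{\nu}-1\right)$. Suppose $\Omega=p/q$ with $p,q$ integers, $q\ge1$, and $\gcd(q,n)=1$. Let $q^*$ be an integer with $qq^*\equiv 1 \pmod n$ and set $1_n=q^*q$ (so $1_n\equiv 1\pmod n$). Then for every integer $j$ and all $t$, $$q_j(t)=q_n\big(t+j\,1_n k\zeta\big).$$ Moreover, writing $\frac{np+q}{kq}=\frac{\ell}{m}$ with $\ell,m$ relatively prime integers and $m\ge1$, the function $q_n$ is $2\pi m$-periodic.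
   Context: Setting: $n$ unit masses in a frame rotating with angular frequency $\sqrt{s_1}$, $s_1=\frac14\sum_{j=1}^{n-1}\frac{\sin^2(j\zeta/2)}{\sin^3(j\zeta/2)}$; a planar Lyapunov orbit of frequency $\nu$, rescaled to period $2\pi$, has the symmetry $u_j(t)=e^{ij\zeta}u_n(t+jk\zeta)$, and $q_j$ are the inertial-frame positions (time rescaled by $\nu$). Note that $\sqrt{s_1}/\nu=(n\Omega+1)/k$. *)

(* Defs.v *)
From Stdlib Require Import Reals ZArith.
Open Scope R_scope.

Definition Cplx : Type := (R * R)%type.

Definition Cmul (z w : Cplx) : Cplx :=
  (fst z * fst w - snd z * snd w, fst z * snd w + snd z * fst w).

Definition Cexpi (theta : R) : Cplx := (cos theta, sin theta).

Definition zeta_of (n : Z) : R := 2 * PI / IZR n.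

Definition u_of (n k : Z) (un : R -> Cplx) (j : Z) (t : R) : Cplx :=
  Cmul (Cexpi (IZR j * zeta_of n)) (un (t + IZR j * IZR k * zeta_of n)).

Definition q_of (n k : Z) (s1 nu : R) (un : R -> Cplx) (j : Z) (t : R) : Cplx :=
  Cmul (Cexpi (t * sqrt s1 / nu)) (u_of n k un j t).

Definition Omega_of (n k : Z) (s1 nu : R) : R :=
  / IZR n * (IZR k * (sqrt s1 / nu) - 1).

(* Main.v *)
Require Import Defs.
From Stdlib Require Import Reals ZArith Lra Lia.
Open Scope R_scope.

Lemma per_gen (A : Type) (f : R -> A) :
  (forall x, f (x + 2 * PI) = f x) -> forall z x, f (x + 2 * PI * IZR z) = f x.
Proof.
  intros H.
  assert (Hn : forall (n : nat) x, f (x + 2 * PI * INR n) = f x).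
  { induction n as [|n IH]; intros x.
    - simpl. f_equal. ring.
    - rewrite S_INR. replace (x + 2 * PI * (INR n + 1)) with ((x + 2 * PI * INR n) + 2 * PI) by ring.
      rewrite H. apply IH. }
  intros z x. destruct (Z_le_gt_dec 0 z) as [Hz|Hz].
  - destruct (Z_of_nat_complete z Hz) as [n ->]. rewrite <- INR_IZR_INZ. apply Hn.
  - assert (Hz' : (0 <= - z)%Z) by lia.
    destruct (Z_of_nat_complete (-z) Hz') as [n Hn'].
    replace z with (- Z.of_nat n)%Z by lia.
    rewrite opp_IZR, <- INR_IZR_INZ.
    rewrite <- (Hn n (x + 2 * PI * - INR n)). f_equal. ring.
Qed.

Lemma Cexpi_per z x : Cexpi (x + 2 * PI * IZR z) = Cexpi x.
Proof.
  apply (per_gen _ Cexpi). intros y. unfold Cexpi.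
  rewrite cos_plus, sin_plus, cos_2PI, sin_2PI. f_equal; ring.
Qed.

Lemma Cmul_expi a b z : Cmul (Cexpi a) (Cmul (Cexpi b) z) = Cmul (Cexpi (a + b)) z.
Proof.
  destruct z as [x y]. unfold Cmul, Cexpi; simpl.
  rewrite cos_plus, sin_plus. f_equal; ring.
Qed.

Theorem proposition1 (n k : Z) (s1 nu : R) (un : R -> Cplx) (p q qstar : Z) :
  (2 <= n)%Z -> k <> 0%Z -> 0 < s1 -> 0 < nu ->
  (forall t : R, un (t + 2 * PI) = un t) ->
  Omega_of n k s1 nu = IZR p / IZR q ->
  (1 <= q)%Z -> Z.gcd q n = 1%Z ->
  ((q * qstar - 1) mod n = 0)%Z ->
  (forall (j : Z) (t : R),
      q_of n k s1 nu un j t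
      = q_of n k s1 nu un n (t + IZR j * IZR (qstar * q) * IZR k * zeta_of n))
  /\
  (forall l m : Z, Z.gcd l m = 1%Z -> (1 <= m)%Z ->
      IZR (n * p + q) / IZR (k * q) = IZR l / IZR m ->
      forall t : R, q_of n k s1 nu un n (t + 2 * PI * IZR m) = q_of n k s1 nu un n t).
Proof.
  intros Hn Hk Hs1 Hnu Hper HOm Hq _ Hmod.
  assert (Hn0 : IZR n <> 0) by (apply not_0_IZR; lia).
  assert (Hq0 : IZR q <> 0) by (apply not_0_IZR; lia).
  assert (Hk0 : IZR k <> 0) by (apply not_0_IZR; lia).
  assert (Hnu0 : nu <> 0) by lra.
  pose proof (per_gen _ un Hper) as PU.
  set (w := sqrt s1 / nu).
  assert (Hw : w = (IZR n * IZR p + IZR q) / (IZR k * IZR q)).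
  { unfold Omega_of in HOm. fold w in HOm.
    assert (IZR k * w = IZR n * (IZR p / IZR q) + 1).
    { rewrite <- HOm. field. auto. }
    apply (Rmult_eq_reg_l (IZR k)); auto. rewrite H. field. auto. }
  assert (Hz : IZR n * zeta_of n = 2 * PI) by (unfold zeta_of; field; auto).
  unfold q_of, u_of.
  assert (Hpw : forall t, t * sqrt s1 / nu = t * w) by (intros; unfold w; field; auto).
  split.
  - intros j t.
    assert (Hdiv : (n | q * qstar - 1)%Z) by (apply Z.mod_divide; [lia|auto]).
    destruct Hdiv as [r Hr].
    assert (Hqq : IZR qstar * IZR q = 1 + IZR r * IZR n).
    { rewrite <- mult_IZR, <- mult_IZR, <- plus_IZR. f_equal. lia. }
    rewrite !Hpw, !Cmul_expi.
    set (s := IZR j * IZR (qstar * q) * IZR k * zeta_of n).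
    replace (t + s + IZR n * IZR k * zeta_of n)
      with ((t + IZR j * IZR k * zeta_of n) + 2 * PI * IZR (j * r * k + k)).
    2:{ unfold s. rewrite plus_IZR, !mult_IZR, Hqq. unfold zeta_of. field. auto. }
    rewrite PU.
    replace ((t + s) * w + IZR n * zeta_of n)
      with ((t * w + IZR j * zeta_of n) + 2 * PI * IZR (j * qstar * p + j * r + 1)).
    2:{ unfold s. rewrite Hw.
        assert (Hqs : IZR qstar = (1 + IZR r * IZR n) / IZR q).
        { rewrite <- Hqq. field. auto. }
        rewrite !plus_IZR, !mult_IZR, Hqs. unfold zeta_of. field. auto. }
    rewrite Cexpi_per. reflexivity.
  - intros l m _ Hm Hlm t.
    assert (Hm0 : IZR m <> 0) by (apply not_0_IZR; lia).
    assert (Hw' : w = IZR l / IZR m).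
    { rewrite Hw, <- Hlm, plus_IZR, !mult_IZR. reflexivity. }
    rewrite !Hpw, !Cmul_expi.
    replace (t + 2 * PI * IZR m + IZR n * IZR k * zeta_of n)
      with ((t + IZR n * IZR k * zeta_of n) + 2 * PI * IZR m) by ring.
    rewrite PU.
    replace ((t + 2 * PI * IZR m) * w + IZR n * zeta_of n)
      with ((t * w + IZR n * zeta_of n) + 2 * PI * IZR l).
    2:{ rewrite Hw'. field. auto. }
    rewrite Cexpi_per. reflexivity.
Qed.
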